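(* Let $n$, $k$, $t$ be positive integers with $k\geq t+1$ and $n\geq 2k$, and let $V$ be an $n$-dimensional vector space over $\mathbb{F}_q$. If $\mathcal{F}\subseteq{V\brack k}$ is an almost $t$-intersecting family with $\tau_t(\mathcal{F})\geq k+1$, then $|\mathcal{F}|\leq\binom{2k-2t+2}{k-t+1}$.
   Context: $q$ is a prime power; ${W\brack k}$ is the set of $k$-dimensional subspaces of $W$. A family $\mathcal{F}\subseteq{V\brack k}$ is almost $t$-intersecting if for each $F\in\mathcal{F}$ there is at most one $F'\in\mathcal{F}$ with $\dim(F\cap F')<t$. A subspace $W$ of $V$ is a $t$-cover of $\mathcal{F}$ if $\dim(W\cap F)\geq t$ for all $F\in\mathcal{F}$; the $t$-covering number $\tau_t(\mathcal{F})$ is the minimum dimension of a $t$-cover of $\mathcal{F}$. *)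

(* Defs.v *)
From HB Require Import structures.
From mathcomp Require Import all_boot all_order all_algebra all_field.
Set Implicit Arguments. Unset Strict Implicit. Unset Printing Implicit Defensive.
Import GRing.Theory.
Local Open Scope ring_scope.

Section Defs.
Variables (F : fieldType) (vT : vectType F).

(* A family of subspaces, given as a duplicate-free list (its size is |F|). *)
Definition almost_t_intersecting (t : nat) (fam : seq {vspace vT}) : Prop :=
  forall A, A \in fam -> (count (fun B => (\dim (A :&: B)%VS < t)%N) fam <= 1)%N.

Definition is_t_cover (t : nat) (fam : seq {vspace vT}) (W : {vspace vT}) : Prop :=
  forall A, A \in fam -> (t <= \dim (W :&: A)%VS)%N.

(* tau_t(fam) >= m, i.e. every t-cover has dimension at least m. *)
Definition tau_ge (t : nat) (fam : seq {vspace vT}) (m : nat) : Prop :=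
  forall W : {vspace vT}, is_t_cover t fam W -> (m <= \dim W)%N.
End Defs.

(* Main.v *)
Require Import Defs.
From HB Require Import structures.
From mathcomp Require Import all_boot all_order all_algebra all_field.
From mathcomp Require Import fingroup perm zify.
Set Implicit Arguments. Unset Strict Implicit. Unset Printing Implicit Defensive.
Import GRing.Theory.
Local Open Scope ring_scope.

Section Laplace.
Variable L : fieldType.
Variable s : nat.

Definition cT := {ffun 'I_s -> 'I_(s+s)}.
Definition Emx (c : cT) : 'M[L]_(s, s+s) :=
  \matrix_(r, j) ((c r == j)%:R).

Lemma det_expand (X Y : 'M[L]_(s, s+s)) :
  \det (col_mx X Y) = \sum_(c : cT)
     (\prod_r X r (c r)) * \det (col_mx (Emx c) Y).
Proof.
have H1 : forall (c : cT) (p : {perm 'I_(s+s)}),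
   \prod_r Emx c r (p (lshift s r)) = (c == [ffun r => p (lshift s r)])%:R.
  move=> c p; case: eqP => [->|/eqP].
    by apply: big1 => r _; rewrite !mxE ffunE eqxx.
  move=> neq; have [r Hr]: exists r, c r != p (lshift s r).
    apply/existsP; move: neq; apply: contraR; rewrite negb_exists => /forallP H.
    by apply/eqP/ffunP => r; rewrite ffunE; apply/eqP; move: (H r); rewrite negbK.
  by rewrite (bigD1 r) //= !mxE (negbTE Hr) mul0r.
rewrite /determinant.
under [RHS]eq_bigr => c _ do rewrite big_distrr /=.
rewrite exchange_big /=; apply: eq_bigr => p _.
have H2 : forall (c : cT), \prod_(i < s + s) col_mx (Emx c) Y i (p i) =
   (c == [ffun r => p (lshift s r)])%:R * \prod_(r < s) Y r (p (rshift s r)).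
  move=> c; rewrite big_split_ord /= -H1; congr (_ * _); apply: eq_bigr => r _.
    by rewrite col_mxEu.
  by rewrite col_mxEd.
rewrite (bigD1 [ffun r => p (lshift s r)]) //= [X in _ + X]big1 ?addr0; last first.
  by move=> c Hc; rewrite H2 (negbTE Hc) mul0r mulr0 mulr0.
rewrite H2 eqxx mul1r big_split_ord /=.
under [in RHS]eq_bigr => r _ do rewrite ffunE.
under [in LHS]eq_bigr => r _ do rewrite col_mxEu.
rewrite mulrCA; congr (_ * (_ * _)); apply: eq_bigr => r _; exact: col_mxEd.
Qed.

Lemma det_E_perm (c c' : {ffun 'I_s -> 'I_(s+s)}) (p : 'S_s) (Y : 'M[L]_(s, s+s)) :
  (forall r, c r = c' (p r)) ->
  \det (col_mx (Emx c) Y) = (-1) ^+ p * \det (col_mx (Emx c') Y).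
Proof.
move=> Hc.
have -> : col_mx (Emx c) Y = block_mx (perm_mx p) 0 0 1%:M *m col_mx (Emx c') Y.
  rewrite mul_block_col !mul0mx mul1mx addr0 add0r -row_permE.
  congr col_mx; apply/matrixP => i j; rewrite !mxE Hc //.
by rewrite det_mulmx det_ublock det1 mulr1 det_perm.
Qed.


Definition img (c : cT) : {set 'I_(s+s)} := [set c r | r : 'I_s].
Definition injb (c : cT) := [forall a, forall b, (c a == c b) ==> (a == b)].

Lemma rank_bound m (X : 'I_m -> 'M[L]_(s, s+s)) :
  (\rank (\matrix_(i, j) \det (col_mx (X i) (X j))) <= 'C(s+s, s))%N.
Proof.
set M := \matrix_(i, j) _.
pose bv (c : cT) : 'rV[L]_m := \row_j \det (col_mx (Emx c) (X j)).
pose pickc S := [pick c : cT | injb c && (img c == S)].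
pose bS S := if pickc S is Some c then bv c else 0.
pose D := [set S : {set 'I_(s+s)} | #|S| == s].
pose B := \matrix_(i < #|D|) bS (enum_val i).
have rowM : forall i, row i M = \sum_(c : cT) (\prod_r X i r (c r)) *: bv c.
  move=> i; apply/rowP => j; rewrite !mxE det_expand summxE.
  by apply: eq_bigr => c _; rewrite !mxE.
have bvB : forall c, (bv c <= B)%MS.
  move=> c; case: (boolP (injb c)) => Hinj; last first.
    move: Hinj; rewrite negb_forall => /existsP [a]; rewrite negb_forall => /existsP [b].
    rewrite negb_imply => /andP [/eqP Hab Hne].
    have -> : bv c = 0.
      apply/rowP => j; rewrite !mxE.
      apply: (@determinant_alternate _ _ _ (lshift s a) (lshift s b)).
        by rewrite (inj_eq (@lshift_inj _ _)).
      by move=> k; rewrite !col_mxEu !mxE Hab.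
    exact: sub0mx.
  have injc : injective c.
    by move=> a b Hab; move/forallP: Hinj => /(_ a) /forallP /(_ b); rewrite Hab eqxx => /eqP.
  have SD : img c \in D.
    by rewrite inE /img card_imset // card_ord.
  case Hpk: (pickc (img c)) => [c'|]; last first.
    by move: Hpk; rewrite /pickc; case: pickP => // Hn _; move: (Hn c); rewrite Hinj eqxx.
  have /andP [Hinj' /eqP Himg] : injb c' && (img c' == img c).
    by move: Hpk; rewrite /pickc; case: pickP => // c'' H [<-].
  have injc' : injective c'.
    by move=> a b Hab; move/forallP: Hinj' => /(_ a) /forallP /(_ b); rewrite Hab eqxx => /eqP.
  pose p0 (r : 'I_s) := odflt r [pick r' | c' r' == c r].
  have Hp0 : forall r, c' (p0 r) = c r.
    move=> r; rewrite /p0; case: pickP => [r' /eqP //|Hn].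
    have : c r \in img c' by rewrite Himg /img; apply/imsetP; exists r.
    by case/imsetP => r' _ Hr'; move: (Hn r'); rewrite Hr' eqxx.
  have p0inj : injective p0.
    by move=> a b Hab; apply: injc; rewrite -!Hp0 Hab.
  pose p := perm p0inj.
  have -> : bv c = (-1) ^+ p *: bv c'.
    apply/rowP => j; rewrite !mxE (@det_E_perm c c' p) // => r.
    by rewrite permE Hp0.
  apply: scalemx_sub.
  have -> : bv c' = bS (img c) by rewrite /bS Hpk.
  rewrite -(enum_rankK_in SD SD).
  have -> : bS (enum_val (enum_rank_in SD (img c))) = row (enum_rank_in SD (img c)) B.
    by apply/rowP => j; rewrite !mxE.
  exact: row_sub.
have MB : (M <= B)%MS.
  apply/row_subP => i; rewrite rowM; apply: summx_sub => c _.
  exact/scalemx_sub/bvB.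
apply: leq_trans (mxrankS MB) _.
apply: leq_trans (rank_leq_row B) _.
by rewrite /D card_draws card_ord.
Qed.

End Laplace.
Section Generic.
Variable L : fieldType.
Hypothesis infL : forall xs : seq L, exists x, x \notin xs.

Lemma rank_add_notsub n m (A : 'M[L]_(m, n)) (v : 'rV[L]_n) :
  ~~ (v <= A)%MS -> \rank (A + v)%MS = (\rank A).+1.
Proof.
move=> Hv; apply/eqP; rewrite eqn_leq; apply/andP; split.
  have [H _] := mxrank_adds_leqif A v.
  apply: leq_trans H _; have := rank_leq_row v; lia.
have := mxrank_leqif_sup (addsmxSl A v).
move=> [Hle Heq]; rewrite ltn_neqAle Hle andbT Heq.
by apply: contra Hv => Hs; apply: submx_trans Hs; apply: addsmxSr.
Qed.

Lemma avoid n (Us : seq 'M[L]_n) :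
  (forall U, U \in Us -> (\rank U < n)%N) ->
  exists v : 'rV[L]_n, forall U, U \in Us -> ~~ (v <= U)%MS.
Proof.
elim: Us => [|U Us IH] Hr; first by exists 0.
have [v Hv] : exists v : 'rV[L]_n, forall U, U \in Us -> ~~ (v <= U)%MS.
  by apply: IH => U' HU'; apply: Hr; rewrite inE HU' orbT.
have HU : (\rank U < n)%N by apply: Hr; rewrite inE eqxx.
case: (boolP (v <= U)%MS) => HvU; last first.
  by exists v => U'; rewrite inE => /orP [/eqP ->|]; [exact: HvU|exact: Hv].
have [w Hw] : exists w : 'rV[L]_n, ~~ (w <= U)%MS.
  have : ~~ (1%:M <= U)%MS by rewrite sub1mx /row_full neq_ltn HU.
  by case/row_subPn => i Hi; exists (row i 1%:M).
pose cand (U' : 'M[L]_n) :=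
  let C := cokermx U' in
  if [pick j | (w *m C) 0 j != 0] is Some j then - (v *m C) 0 j / (w *m C) 0 j else 0.
have [x Hx] := infL (0 :: map cand Us).
exists (v + x *: w) => U'; rewrite inE => /orP [/eqP ->|HU'].
  apply: contra Hw => Hs.
  have Hx0 : x != 0 by apply: contra Hx => /eqP ->; rewrite inE eqxx.
  have : (x *: w <= U)%MS.
    have -> : x *: w = (v + x *: w) - v by rewrite [v + _]addrC addrK.
    by rewrite addmx_sub // eqmx_opp.
  by move/(scalemx_sub x^-1); rewrite scalerA mulVf // scale1r.
apply/negP => Hs.
have HvU' := Hv U' HU'.
move: Hs; rewrite submxE mulmxDl -scalemxAl.
set a := v *m cokermx U'; set b := w *m cokermx U'.
case: (pickP (fun j => b 0 j != 0)) => [j Hj|Hn].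
  move/eqP => Hrow.
  move: Hx; rewrite inE negb_or => /andP [_ /negP]; apply.
  apply/mapP; exists U' => //; rewrite /cand -/a -/b; case: pickP => [j' Hj'|/(_ j)]; last by rewrite Hj.
  clear cand; clearbody a b.
  have := congr1 (fun M : 'rV[L]_n => M 0 j') Hrow; rewrite !mxE /= => H.
  have Hxb : x * b 0 j' = - a 0 j' by apply/eqP; rewrite -addr_eq0 addrC H.
  by rewrite -[x](mulfK Hj') Hxb.
have Hw0 : b = 0 by apply/rowP => j; rewrite [RHS]mxE; move: (Hn j) => /negbFE/eqP.
rewrite Hw0 scaler0 addr0 => /eqP H; move: HvU'; by rewrite submxE -/a H eqxx.
Qed.


Lemma gen n p (Us : seq 'M[L]_n) : (p <= n)%N ->
  exists H : 'M[L]_n, \rank H = p /\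
    forall U, U \in Us -> \rank (U + H)%MS = minn n (\rank U + p).
Proof.
elim: p => [_|p IH Hp].
  exists 0; rewrite mxrank0; split => // U _.
  rewrite addsmx0_id addn0.
  by have := rank_leq_col U; lia.
have [H [rH HU]] := IH (ltnW Hp).
pose Ws := H :: [seq (U + H)%MS | U <- Us & (\rank (U + H)%MS < n)%N].
have [v Hv] : exists v : 'rV[L]_n, forall W, W \in Ws -> ~~ (v <= W)%MS.
  apply: avoid => W; rewrite inE => /orP [/eqP ->|]; first by rewrite rH.
  by case/mapP => U; rewrite mem_filter => /andP [Hl _] ->.
exists (H + v)%MS; split.
  by rewrite rank_add_notsub ?rH //; apply: Hv; rewrite inE eqxx.
move=> U HUs.
have -> : \rank (U + (H + v))%MS = \rank ((U + H) + v)%MS.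
  by rewrite addsmxA.
case: (ltnP (\rank (U + H)%MS) n) => Hlt.
  rewrite rank_add_notsub; last first.
    by apply: Hv; rewrite inE; apply/orP; right; apply/mapP; exists U => //; rewrite mem_filter Hlt.
  by rewrite HU //; move: Hlt; rewrite HU //; lia.
have Hn : \rank (U + H + v)%MS = n.
  apply/eqP; rewrite eqn_leq rank_leq_col /=.
  apply: leq_trans Hlt (mxrankS _); exact: addsmxSl.
by rewrite Hn; move: Hlt; rewrite HU //; lia.
Qed.

End Generic.
Section Proj.
Variable L : fieldType.

Lemma base_exists m n r (R : 'M[L]_(m, n)) : \rank R = r ->
  exists B : 'M[L]_(r, n), row_free B /\ (B == R)%MS.
Proof.
by move=> <-; exists (row_base R); split; [exact: row_base_free | exact/eqmxP/eq_row_base].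
Qed.

Lemma proj_exists n r (D : 'M[L]_n) : (\rank D + r = n)%N ->
  exists G : 'M[L]_(n, r), forall a (W : 'M[L]_(a, n)),
    (\rank (W *m G) + \rank (W :&: D)%MS = \rank W)%N.
Proof.
move=> HDr; set R := cokermx D.
have rR : \rank R = r by rewrite mxrank_coker; lia.
have [B [fB eBR]] := base_exists rR.
exists (R *m pinvmx B) => a W.
have -> : \rank (W *m (R *m pinvmx B)) = \rank (W *m R).
  rewrite -(mxrankMfree _ fB) mulmxA mulmxKpV //.
  by rewrite (eqmxP eBR) submxMl.
have eK : (kermx R == D)%MS.
  apply/andP; split.
    by rewrite submxE mulmx_ker.
  by rewrite sub_kermx mulmx_coker.
rewrite -(mxrank_mul_ker W R); congr (_ + _)%N.
by apply: eqmx_rank; apply/eqmxP; apply: cap_eqmx; [exact: eqmx_refl | apply: eqmx_sym; exact/eqmxP].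
Qed.

End Proj.
Section Main.
Variable L : fieldType.
Hypothesis infL : forall xs : seq L, exists x, x \notin xs.

Lemma capsubmx n (A B C : 'M[L]_n) : ((A :&: C) :&: (B :&: C) <= (A :&: B) :&: C)%MS.
Proof.
rewrite sub_capmx; apply/andP; split; first by apply: capmxS; apply: capmxSl.
by apply: submx_trans (capmxSl _ _) _; apply: capmxSr.
Qed.

Lemma capsupmx n (A B C : 'M[L]_n) : ((A :&: B) :&: C <= (A :&: C) :&: (B :&: C))%MS.
Proof.
by rewrite sub_capmx; apply/andP; split; apply: capmxS => //;
  [apply: capmxSl | apply: capmxSr].
Qed.

Lemma rank_det1 r (A : 'M[L]_r) : \rank A = r -> \det A != 0.
Proof. by move=> h; rewrite -unitfE -unitmxE -row_free_unit /row_free h. Qed.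

Lemma rank_det0 r (A : 'M[L]_r) : (\rank A < r)%N -> \det A = 0.
Proof.
move=> h; apply/eqP; move: h; apply: contraTT.
rewrite -unitfE -unitmxE -row_free_unit /row_free => /eqP ->.
by rewrite ltnn.
Qed.

Lemma castmx_eqmx r1 r2 n (e : r1 = r2) (A : 'M[L]_(r1, n)) :
  (castmx (e, erefl n) A == A)%MS.
Proof. by case: r2 / e; rewrite castmx_id; apply/eqmxP; exact: eqmx_refl. Qed.

Lemma matrix_main (n k t m : nat) (K : 'I_m -> 'M[L]_n) (sg : 'I_m -> 'I_m) :
  (0 < t)%N -> (t < k)%N -> (2 * k <= n)%N ->
  (forall i, \rank (K i) = k) ->
  (forall i, (\rank (K i :&: K (sg i))%MS < t)%N) ->
  (forall i j, j != sg i -> (t <= \rank (K i :&: K j)%MS)%N) ->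
  injective sg ->
  (m <= 'C((k - t).+1 + (k - t).+1, (k - t).+1))%N.
Proof.
move=> t0 tk kn rK rP rN sginj.
set s := (k - t).+1.
pose Us1 := [seq K i | i <- enum 'I_m] ++ [seq (K i :&: K (sg i))%MS | i <- enum 'I_m].
have hp1 : ((n - t).+1 <= n)%N by lia.
have [H [rH HH]] := gen infL Us1 hp1.
have rKH : forall i, \rank (K i + H)%MS = n.
  by move=> i; rewrite HH ?mem_cat ?map_f ?mem_enum // rK; lia.
have rKKH : forall i, \rank ((K i :&: K (sg i)) + H)%MS = (\rank (K i :&: K (sg i)) + (n - t).+1)%N.
  move=> i; rewrite HH; last by rewrite mem_cat; apply/orP; right; rewrite map_f ?mem_enum.
  by have := rP i; lia.
pose Z i := (K i :&: H)%MS.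
have rZ : forall i, \rank (Z i) = s.
  by move=> i; have := mxrank_sum_cap (K i) H; rewrite /Z rKH rK rH /s; lia.
have ZP : forall i, \rank (Z i :&: Z (sg i))%MS = 0%N.
  move=> i; apply/eqP; rewrite -leqn0.
  apply: leq_trans (mxrankS (capsubmx _ _ _)) _.
  by have := mxrank_sum_cap (K i :&: K (sg i))%MS H; rewrite rKKH rH; lia.
have ZN : forall i j, j != sg i -> (0 < \rank (Z i :&: Z j)%MS)%N.
  move=> i j hj; apply: leq_trans (mxrankS (capsupmx _ _ _)).
  have := mxrank_sum_cap (K i :&: K j)%MS H; have := rank_leq_col (K i :&: K j + H)%MS.
  by have := rN i j hj; rewrite rH; lia.
have rZZ : forall i, \rank (Z i + Z (sg i))%MS = (s + s)%N.
  by move=> i; have := mxrank_sum_cap (Z i) (Z (sg i)); rewrite ZP !rZ; lia.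
pose Us2 := [seq (Z i + Z (sg i))%MS | i <- enum 'I_m].
have hp2 : (n - (s + s) <= n)%N by lia.
have [D [rD HD]] := gen infL Us2 hp2.
have rZD : forall i, \rank ((Z i + Z (sg i)) :&: D)%MS = 0%N.
  move=> i; have := mxrank_sum_cap (Z i + Z (sg i))%MS D.
  rewrite HD ?map_f ?mem_enum // rZZ rD /s; lia.
have hp3 : (\rank D + (s + s) = n)%N by rewrite rD /s; lia.
have [G HG] := proj_exists hp3.
pose Zb i := castmx (rZ i, erefl n) (row_base (Z i)).
have eZb : forall i, (Zb i == Z i)%MS.
  by move=> i; apply/eqmxP; apply: eqmx_trans (eqmxP (castmx_eqmx _ _)) (eq_row_base _).
pose X i := Zb i *m G.
have eW : forall i j, (col_mx (Zb i) (Zb j) == Z i + Z j)%MS.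
  move=> i j; apply/eqmxP; apply: eqmx_trans (eqmx_sym (addsmxE _ _)) _.
  by apply: adds_eqmx; apply/eqmxP.
have rX : forall i j, (\rank (col_mx (X i) (X j)) + \rank ((Z i + Z j) :&: D)%MS
                        = \rank (Z i + Z j)%MS)%N.
  move=> i j; rewrite /X -mul_col_mx.
  rewrite -(eqmx_rank (eW i j)) -(HG _ (col_mx (Zb i) (Zb j))); congr (_ + _)%N.
  apply: eqmx_rank; apply/eqmxP; apply: cap_eqmx; last exact: eqmx_refl.
  by apply: eqmx_sym; apply/eqmxP.
have detP : forall i, \det (col_mx (X i) (X (sg i))) != 0.
  by move=> i; apply: rank_det1; have := rX i (sg i); rewrite rZD rZZ; lia.
have detN : forall i j, j != sg i -> \det (col_mx (X i) (X j)) = 0.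
  move=> i j hj; apply: rank_det0; have := rX i j; have := ZN i j hj.
  by have := mxrank_sum_cap (Z i) (Z j); rewrite !rZ; lia.
pose M := \matrix_(i, j) \det (col_mx (X i) (X j)).
have bound := rank_bound X; rewrite -/M in bound.
apply: leq_trans bound.
pose p := perm sginj.
pose d := \row_i \det (col_mx (X i) (X (sg i))).
have eM : col_perm p M = diag_mx d.
  apply/matrixP => i j; rewrite !mxE permE.
  case: (eqVneq i j) => [->|hij]; first by rewrite mulr1n.
  rewrite mulr0n detN //.
  by apply: contra hij => /eqP /sginj ->.
have : \rank (diag_mx d) = m.
  apply: mxrank_unit; rewrite unitmxE unitfE det_diag.
  by apply/prodf_neq0 => i _; rewrite mxE.
move=> hm; rewrite -[X in (X <= _)%N]hm -eM col_permE.
exact: mxrankM_maxl.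
Qed.

End Main.

Import VectorInternalTheory.

Lemma frac_inf (F : fieldType) (xs : seq {fraction {poly F}}) : exists x, x \notin xs.
Proof.
pose g (i : nat) : {fraction {poly F}} := tofrac ('X^i).
have ginj : injective g.
  move=> i j /eqP; rewrite /g tofrac_eq => /eqP h.
  by have := congr1 (fun p : {poly F} => size p) h; rewrite !size_polyXn => -[].
case: (boolP (all (fun i => g i \in xs) (iota 0 (size xs).+1))) => [Hall|].
  have : (size (map g (iota 0 (size xs).+1)) <= size xs)%N.
    apply: uniq_leq_size; first by rewrite map_inj_uniq // iota_uniq.
    by move=> x /mapP [i Hi ->]; move/allP: Hall; apply.
  by rewrite size_map size_iota ltnn.
by case/allPn => i _ Hi; exists (g i).
Qed.

Theorem lemma3p1 (F : finFieldType) (vT : vectType F) (n k t : nat)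
  (fam : seq {vspace vT}) :
  (0 < n)%N -> (0 < k)%N -> (0 < t)%N -> (t.+1 <= k)%N -> (2 * k <= n)%N ->
  \dim (fullv : {vspace vT}) = n ->
  uniq fam ->
  (forall A, A \in fam -> \dim A = k) ->
  almost_t_intersecting t fam ->
  tau_ge t fam k.+1 ->
  (size fam <= 'C(2 * k - 2 * t + 2, k - t + 1))%N.
Proof.
move=> n0 k0 t0 tk kn dimn Hu Hdim Halm Htau.
set m := size fam.
pose A (i : 'I_m) := nth 0%VS fam i.
have Amem : forall i, A i \in fam by move=> i; rewrite mem_nth.
have Ainj : forall i j, (A i == A j) = (i == j) by move=> i j; rewrite nth_uniq.
have two : forall a b c, b != c -> (\dim (A a :&: A b)%VS < t)%N ->
    (\dim (A a :&: A c)%VS < t)%N -> False.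
  move=> a b c hbc hb hc; have := Halm _ (Amem a).
  rewrite -size_filter.
  have : (size [:: A b; A c] <= size (filter (fun B => (\dim (A a :&: B)%VS < t)%N) fam))%N.
    apply: uniq_leq_size; first by rewrite /= inE Ainj hbc.
    by move=> x; rewrite !inE => /orP [/eqP ->|/eqP ->]; rewrite mem_filter ?hb ?hc Amem.
  by rewrite /=; lia.
pose sg i := odflt i [pick j | (\dim (A i :&: A j)%VS < t)%N].
have sgP : forall i, (\dim (A i :&: A (sg i))%VS < t)%N.
  move=> i; rewrite /sg; case: pickP => [j //|Hn].
  have cover : is_t_cover t fam (A i).
    move=> B HB; rewrite -(nth_index 0%VS HB).
    have hj : (index B fam < m)%N by rewrite index_mem.
    by move: (Hn (Ordinal hj)); rewrite /A /= => /negbT; rewrite -leqNgt.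
  by have := Htau _ cover; rewrite Hdim ?Amem // ltnn.
have sginj : injective sg.
  move=> i i' h; case: (eqVneq i i') => // hne; exfalso.
  apply: (two (sg i) i i') => //; rewrite capvC; first exact: sgP.
  by rewrite h; exact: sgP.
have rN : forall i j, j != sg i -> (t <= \dim (A i :&: A j)%VS)%N.
  move=> i j hj; rewrite leqNgt; apply/negP => h.
  exact: (two i j (sg i) hj h (sgP i)).
pose ff : {rmorphism F -> {fraction {poly F}}} := (@tofrac _ \o polyC).
pose K i := map_mx ff (vs2mx (A i)).
have rKK : forall i j, \rank (K i :&: K j)%MS = \dim (A i :&: A j)%VS.
  move=> i j.
  have e : (map_mx ff (vs2mx (A i) :&: vs2mx (A j)) == K i :&: K j)%MS.
    by apply/eqmxP; exact: map_capmx.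
  rewrite -(eqmx_rank e) mxrank_map /dimv /capv.
  by apply: eqmx_rank; apply/eqmxP; apply: eqmx_sym; apply: mx2vsK.
have rK : forall i, \rank (K i) = k by move=> i; rewrite mxrank_map; exact: Hdim.
have kn' : (2 * k <= dim vT)%N by rewrite -dimvf dimn.
have := @matrix_main _ (@frac_inf F) (dim vT) k t m K sg t0 tk kn' rK.
move/(_ _ _ sginj).
have -> : (2 * k - 2 * t + 2 = (k - t).+1 + (k - t).+1)%N by lia.
have -> : (k - t + 1 = (k - t).+1)%N by lia.
apply.
  by move=> i; rewrite rKK; exact: sgP.
by move=> i j hj; rewrite rKK; exact: rN.
Qed.
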